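(* Let $\Theta$ be an open saturated branch of a tableau in $\mathbf{TAB}_{\mathbf{IB}}$ with root formula $@_{i_0}\varphi_0$, let $\mathcal{M}^\Theta=(W^\Theta,R^\Theta,V^\Theta)$ be its model, $W^\Theta_r=\{w\in W^\Theta\mid wR^\Theta w\}$, and $\mathcal{M}^\Theta_B$ the bulldozed model of $\mathcal{M}^\Theta$. Let $i$ be an identity urfather on $\Theta$ and $\varphi$ a formula such that $@_i\varphi$ is a quasi-subformula of $@_{i_0}\varphi_0$. Then $\mathcal{M}^\Theta,i\models\varphi$ if and only if $\mathcal{M}^\Theta_B,i_B\models\varphi$, where $i_B=(i,0)$ if $i\in W^\Theta_r$ and $i_B=i$ otherwise.
   Context: Hybrid language: fix disjoint countably infinite sets $\mathbf{Prop}$ (propositional variables) and $\mathbf{Nom}$ (nominals). Formulas: $\varphi ::= p \mid i \mid \neg\varphi \mid \varphi\land\varphi \mid \Diamond\varphi \mid @_i\varphi$ with $p\in\mathbf{Prop}$, $i\in\mathbf{Nom}$; $\Box\varphi$ abbreviates $\neg\Diamond\neg\varphi$. A model $\mathcal{M}=(W,R,V)$ has $W$ nonempty, $R\subseteq W\times W$, and $V:\mathbf{Prop}\cup\mathbf{Nom}\to\mathcal{P}(W)$ with $V(i)=\{i^V\}$ a singleton for each nominal $i$. Satisfaction: $\mathcal{M},w\models p$ iff $w\in V(p)$; $\mathcal{M},w\models i$ iff $w=i^V$; Boolean clauses as usual; $\mathcal{M},w\models\Diamond\varphi$ iff there is $v$ with $wRv$ and $\mathcal{M},v\models\varphi$;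 $\mathcal{M},w\models @_i\varphi$ iff $\mathcal{M},i^V\models\varphi$. Tableau calculus $\mathbf{TAB}_{\mathbf{IB}}$. A tableau is a well-founded tree whose nodes are formulas of the form $@_i\varphi$; its root is a formula $@_i\varphi$ (the root formula) where $i$ does not occur in $\varphi$. A branch is a maximal path; $\varphi\in\Theta$ means $\varphi$ occurs on branch $\Theta$. Each branch is extended by applying the rules below to its formulas as often as possible, except that no further formula is added to a branch once either (i) every new formula generated by applying any rule already occurs on the branch, or (ii) the branch is closed, i.e. contains $@_i\varphi$ and $@_i\neg\varphi$ for some formula $\varphi$ and nominal $i$. Open means not closed. A branch is saturated if every new formula generated by applying some rule already occurs on it. An accessibility formula is a formula $@_i\Diamond j$ added by rule $[\Diamond]$ (with $j$ the new nominal). Rules (premises already on the branch; conclusions added to it): [$\neg\neg$] from $@_i\neg\neg\varphi$ add $@_i\varphi$; [$\land$] from $@_i(\varphi\land\psi)$ add $@_i\varphi$ and $@_i\psi$; [$\neg\land$] from $@_i\neg(\varphi\land\psi)$ split the branch into one extended by $@_i\neg\varphi$ and one extended by $@_i\neg\psi$; [$\Diamond$] from $@_i\Diamond\varphi$, which is not an accessibility formula, add $@_i\Diamond j$ and $@_j\varphi$ where $j$ is a nominal not occurring on the branch; this rule is applied at most once per formula, and only if $i$ is a quasi-urfather on the branch (defined below); [$\neg\Diamond$] from $@_i\neg\Diamond\varphi$ and $@_i\Diamond j$ add $@_j\neg\varphi$; [$\Box_{sym}$] from $@_i\Box\varphi$ and $@_j\Diamond i$ add $@_j\varphi$; [$@$]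 from $@_i@_j\varphi$ add $@_j\varphi$; [$\neg@$] from $@_i\neg@_j\varphi$ add $@_j\neg\varphi$; [$Id$] from $@_i\varphi$, which is not an accessibility formula, and $@_i j$ add $@_j\varphi$; [$Ref$] for any nominal $i$ occurring on the branch add $@_i i$; ($\mathcal{I}$) for any nominal $i$ occurring on the branch add $@_i\neg\Diamond i$. Auxiliary notions for a branch $\Theta$. $@_i\varphi$ is a quasi-subformula of $@_j\psi$ if $\varphi$ is a subformula of $\psi$, or $\varphi=\neg\chi$ with $\chi$ a subformula of $\psi$. For a nominal $i$ occurring in $\Theta$, $T^\Theta(i)=\{\varphi \mid @_i\varphi\in\Theta$ and $@_i\varphi$ is a quasi-subformula of the root formula$\}$. Nominals $i,j$ are twins if $T^\Theta(i)=T^\Theta(j)$. $i\prec_\Theta j$ if $j$ was introduced by applying $[\Diamond]$ to a formula $@_i\Diamond\varphi$; $\prec_\Theta^*$ is its reflexive transitive closure. A nominal $i$ is a quasi-urfather on $\Theta$ if there are no twins $j\neq k$ with $j\prec_\Theta^* i$ and $k\prec_\Theta^* i$. The identity urfather $v_\Theta(i)$ of a nominal $i$ occurring in $\Theta$ is the earliest introduced nominal $j$ on $\Theta$ such that $j$ is a twin of $i$ and $j$ is a quasi-urfather; it may fail to exist, and $\mathrm{dom}(v_\Theta)$ denotes the set of nominals for which it exists. A nominal is called an identity urfather on $\Theta$ if it is the identity urfather of some nominal (equivalently $v_\Theta(i)=i$). The model $\mathcal{M}^\Theta=(W^\Theta,R^\Theta,V^\Theta)$ of an open saturated branch $\Theta$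 with root formula $@_{i_0}\varphi_0$: $W^\Theta$ is the set of identity urfathers on $\Theta$; $R^\Theta=\{(v_\Theta(i),v_\Theta(j)) \mid @_i\Diamond j\in\Theta,\ i,j\in\mathrm{dom}(v_\Theta)\}\cup\{(v_\Theta(j),v_\Theta(i)) \mid @_i\Diamond j\in\Theta,\ i,j\in\mathrm{dom}(v_\Theta)\}$; $V^\Theta(p)=\{v_\Theta(i)\mid @_i p\in\Theta\}$ for $p\in\mathbf{Prop}$; for a nominal $i$, $V^\Theta(i)=\{v_\Theta(i)\}$ if $i\in\mathrm{dom}(v_\Theta)$ and $V^\Theta(i)=\{i_0\}$ otherwise. Bulldozed model: given a model $\mathcal{M}=(W,R,V)$, let $W_r=\{w\in W\mid wRw\}$, $W^-=W\setminus W_r$, and $W_B=W^-\cup\{(w,n)\mid w\in W_r,\ n\in\{0,1\}\}$. Let $\alpha:W_B\to W$ be $\alpha(w)=w$ for $w\in W^-$ and $\alpha((w,n))=w$. Define $wR_Bv$ iff one of: ($w\in W^-$ or $v\in W^-$) and $\alpha(w)R\alpha(v)$; or $w=(w',m)$, $v=(v',n)$, $w'\neq v'$ and $w'Rv'$; or $w\neq v$ and $\alpha(w)=\alpha(v)$. Define $V_B(p)=\{w\in W_B\mid\alpha(w)\in V(p)\}$ for $p\in\mathbf{Prop}$; for a nominal $i$, $V_B(i)=\{(i^V,0)\}$ if $i^V\in W_r$, and $V_B(i)=V(i)$ otherwise. The bulldozed model is $\mathcal{M}_B=(W_B,R_B,V_B)$; $\mathcal{M}^\Theta_B$ denotes the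 bulldozed model of $\mathcal{M}^\Theta$. *)

(* Defs.v *)
From Stdlib Require Import List Arith Relation_Operators ClassicalEpsilon.
Import ListNotations.

Inductive form : Type :=
| Prop_ (p : nat)
| Nom (i : nat)
| Neg (f : form)
| And (f g : form)
| Dia (f : form)
| At (i : nat) (f : form).

Definition Box (f : form) : form := Neg (Dia (Neg f)).

Inductive subf : form -> form -> Prop :=
| subf_refl f : subf f f
| subf_neg f g : subf f g -> subf f (Neg g)
| subf_andl f g h : subf f g -> subf f (And g h)
| subf_andr f g h : subf f h -> subf f (And g h)
| subf_dia f g : subf f g -> subf f (Dia g)
| subf_at f i g : subf f g -> subf f (At i g).

(* @_i phi is a quasi-subformula of @_j psi  (depends only on phi, psi) *)
Definition qsub (phi psi : form) : Prop :=
  subf phi psi \/ exists chi, phi = Neg chi /\ subf chi psi.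

Fixpoint noms (f : form) : list nat :=
  match f with
  | Prop_ _ => []
  | Nom i => [i]
  | Neg g => noms g
  | And g h => noms g ++ noms h
  | Dia g => noms g
  | At i g => i :: noms g
  end.

(* Models.  Worlds are the elements of [carrier] satisfying [world].       *)
Record model : Type := Model {
  carrier : Type;
  world : carrier -> Prop;
  rel : carrier -> carrier -> Prop;
  vprop : nat -> carrier -> Prop;
  vnom : nat -> carrier   (* V(i) = {vnom i} *)
}.

Fixpoint sat (M : model) (w : carrier M) (f : form) : Prop :=
  match f with
  | Prop_ p => vprop M p w
  | Nom i => w = vnom M i
  | Neg g => ~ sat M w g
  | And g h => sat M w g /\ sat M w h
  | Dia g => exists v, world M v /\ rel M w v /\ sat M v g
  | At i g => sat M (vnom M i) g
  end.

(* Branches.  A branch is its root formula @_{root_nom} root_form followed by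
   the sequence of rule applications performed on it (in order).           *)
Inductive step : Type :=
| SDia (i : nat) (phi : form) (j : nat)
    (* rule [Dia] applied to @_i Dia phi with new nominal j:
       adds @_i Dia j (an accessibility formula) and @_j phi *)
| SAdd (f : form).
    (* a formula added by one of the other rules *)

Record branch : Type := Branch {
  root_nom : nat;
  root_form : form;
  steps : list step
}.

Definition step_forms (s : step) : list form :=
  match s with
  | SDia i phi j => [At i (Dia (Nom j)); At j phi]
  | SAdd f => [f]
  end.

Definition forms (B : branch) : list form :=
  At (root_nom B) (root_form B) :: flat_map step_forms (steps B).

Definition on (B : branch) (f : form) : Prop := In f (forms B).

Definition prefix (B : branch) (n : nat) : branch :=
  Branch (root_nom B) (root_form B) (firstn n (steps B)).

Definition occurs (B : branch) (i : nat) : Prop :=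
  In i (flat_map noms (forms B)).

Definition acc (B : branch) (f : form) : Prop :=
  exists i phi j, In (SDia i phi j) (steps B) /\ f = At i (Dia (Nom j)).

Definition prec (B : branch) (i j : nat) : Prop :=
  exists phi, In (SDia i phi j) (steps B).

Definition prec_star (B : branch) : nat -> nat -> Prop :=
  clos_refl_trans nat (prec B).

Definition T (B : branch) (i : nat) (phi : form) : Prop :=
  on B (At i phi) /\ qsub phi (root_form B).

Definition twins (B : branch) (i j : nat) : Prop :=
  forall phi, T B i phi <-> T B j phi.

Definition quasi_urfather (B : branch) (i : nat) : Prop :=
  ~ exists j k, j <> k /\ prec_star B j i /\ prec_star B k i /\ twins B j k.

Definition closed (B : branch) : Prop :=
  exists i phi, on B (At i phi) /\ on B (At i (Neg phi)).

(* conclusions of the non-branching rules other than [Dia] *)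
Definition concl_nb (B : branch) (f : form) : Prop :=
  (exists i phi, on B (At i (Neg (Neg phi))) /\ f = At i phi)
  \/ (exists i phi psi, on B (At i (And phi psi)) /\
                         (f = At i phi \/ f = At i psi))
  \/ (exists i phi j, on B (At i (Neg (Dia phi))) /\ on B (At i (Dia (Nom j)))
                      /\ f = At j (Neg phi))
  \/ (exists i phi j, on B (At i (Box phi)) /\ on B (At j (Dia (Nom i)))
                      /\ f = At j phi)
  \/ (exists i j phi, on B (At i (At j phi)) /\ f = At j phi)
  \/ (exists i j phi, on B (At i (Neg (At j phi))) /\ f = At j (Neg phi))
  \/ (exists i j phi, on B (At i phi) /\ ~ acc B (At i phi) /\
                      on B (At i (Nom j)) /\ f = At j phi)
  \/ (exists i, occurs B i /\ f = At i (Nom i))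
  \/ (exists i, occurs B i /\ f = At i (Neg (Dia (Nom i)))).

Definition dia_applicable (B : branch) (i : nat) (phi : form) : Prop :=
  on B (At i (Dia phi)) /\ ~ acc B (At i (Dia phi)) /\
  (~ exists j, In (SDia i phi j) (steps B)) /\ quasi_urfather B i.

Definition saturated (B : branch) : Prop :=
  (forall f, concl_nb B f -> on B f)
  /\ (forall i phi psi, on B (At i (Neg (And phi psi))) ->
        on B (At i (Neg phi)) \/ on B (At i (Neg psi)))
  /\ (forall i phi, ~ dia_applicable B i phi).

Definition valid_step (B : branch) (s : step) : Prop :=
  match s with
  | SDia i phi j => dia_applicable B i phi /\ ~ occurs B j
  | SAdd f =>
      ~ on B f /\
      (concl_nb B f \/
       exists i phi psi, on B (At i (Neg (And phi psi))) /\
                         (f = At i (Neg phi) \/ f = At i (Neg psi)))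
  end.

Definition is_branch (B : branch) : Prop :=
  ~ In (root_nom B) (noms (root_form B)) /\
  forall n s, nth_error (steps B) n = Some s ->
    ~ closed (prefix B n) /\ ~ saturated (prefix B n) /\ valid_step (prefix B n) s.

(* order of introduction: first occurrence in the nominal sequence of the
   branch (root nominal first, then the root formula left to right, then the
   nominals introduced by [Dia]) *)
Definition introduced_no_later (B : branch) (i j : nat) : Prop :=
  exists m, nth_error (flat_map noms (forms B)) m = Some i /\
    forall m', nth_error (flat_map noms (forms B)) m' = Some j -> m <= m'.

(* v_B(i) = j *)
Definition idurf_of (B : branch) (i j : nat) : Prop :=
  occurs B i /\ occurs B j /\ twins B j i /\ quasi_urfather B j /\
  forall k, occurs B k -> twins B k i -> quasi_urfather B k ->
    introduced_no_later B j k.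

Definition in_dom (B : branch) (i : nat) : Prop := exists j, idurf_of B i j.

Definition identity_urfather (B : branch) (i : nat) : Prop := idurf_of B i i.

Definition branch_model (B : branch) : model :=
  Model nat
    (identity_urfather B)
    (fun a b => exists i j, on B (At i (Dia (Nom j))) /\ in_dom B i /\ in_dom B j /\
        ((idurf_of B i a /\ idurf_of B j b) \/ (idurf_of B j a /\ idurf_of B i b)))
    (fun p w => exists i, on B (At i (Prop_ p)) /\ idurf_of B i w)
    (fun i => epsilon (inhabits 0)
       (fun w => idurf_of B i w \/ (~ in_dom B i /\ w = root_nom B))).

(* Bulldozing. W_B = W^- ⊎ (W_r × {0,1}) encoded as inl / inr; 0 = false. *)
Definition bd_carrier (M : model) : Type := (carrier M + (carrier M * bool))%type.

Definition alpha (M : model) (x : bd_carrier M) : carrier M :=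
  match x with inl w => w | inr (w, _) => w end.

Definition in_minus (M : model) (x : bd_carrier M) : Prop :=
  match x with inl _ => True | inr _ => False end.

Definition bd_pt (M : model) (w : carrier M) : bd_carrier M :=
  if excluded_middle_informative (rel M w w) then inr (w, false) else inl w.

Definition bulldoze (M : model) : model :=
  Model (bd_carrier M)
    (fun x => match x with
              | inl w => world M w /\ ~ rel M w w
              | inr (w, _) => world M w /\ rel M w w
              end)
    (fun x y =>
       ((in_minus M x \/ in_minus M y) /\ rel M (alpha M x) (alpha M y))
       \/ (exists w' m v' n, x = inr (w', m) /\ y = inr (v', n) /\ w' <> v' /\ rel M w' v')
       \/ (x <> y /\ alpha M x = alpha M y))
    (fun p x => vprop M p (alpha M x))
    (fun i => bd_pt M (vnom M i)).

(* Main.v *)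
Require Import Defs.
From Stdlib Require Import List Arith Relation_Operators Operators_Properties ClassicalEpsilon Classical Lia.
Import ListNotations.

Lemma subf_trans a b c : subf a b -> subf b c -> subf a c.
Proof. intros H1 H2; revert H1; induction H2; intro H1; [exact H1|apply subf_neg|apply subf_andl|apply subf_andr|apply subf_dia|apply subf_at]; auto. Qed.

Lemma subf_Nom k f : subf (Nom k) f -> In k (noms f).
Proof.
  intro H; induction f; inversion H; subst; simpl; auto with datatypes.
Qed.

Lemma subf_At j g f : subf (At j g) f -> In j (noms f).
Proof.
  intro H; induction f; inversion H; subst; simpl; auto with datatypes.
Qed.

Lemma alpha_bd M w : alpha M (bd_pt M w) = w.
Proof. unfold bd_pt; destruct (excluded_middle_informative _); reflexivity. Qed.

Lemma world_bd M w : world M w -> world (bulldoze M) (bd_pt M w).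
Proof. intro H; unfold bd_pt; destruct (excluded_middle_informative _); simpl; auto. Qed.

Lemma bd_equiv (M : model) (r : form)
  (H1 : forall k, subf (Nom k) r -> ~ rel M (vnom M k) (vnom M k))
  (H2 : forall j, In j (noms r) -> world M (vnom M j)) :
  forall g, subf g r -> forall x, world (bulldoze M) x ->
    (sat (bulldoze M) x g <-> sat M (alpha M x) g).
Proof.
  induction g; intros Hg x Hx.
  - reflexivity.
  - simpl. pose proof (H1 i Hg) as Hn. unfold bd_pt.
    destruct (excluded_middle_informative _) as [h|h]; [contradiction|].
    destruct x as [u|[u m]]; simpl in *; split; intro E.
    + injection E; auto.
    + subst; reflexivity.
    + discriminate.
    + destruct Hx; subst; contradiction.
  - simpl. rewrite IHg; [tauto| |exact Hx].
    eapply subf_trans; [|exact Hg]. constructor; constructor.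
  - simpl. rewrite IHg1, IHg2; try tauto; eapply subf_trans; try exact Hg.
    + apply subf_andr, subf_refl.
    + apply subf_andl, subf_refl.
  - assert (Hs : subf g r) by (eapply subf_trans; [|exact Hg]; repeat constructor).
    simpl. split.
    + intros [y [Hy [Hr Hsy]]].
      rewrite (IHg Hs y Hy) in Hsy.
      exists (alpha M y). split; [|split; [|exact Hsy]].
      * destruct y as [u|[u m]]; simpl in Hy; tauto.
      * destruct Hr as [[_ Hr]|[Hr|[Hne Heq]]]; auto.
        -- destruct Hr as (w'&m&v'&n&->&->&_&Hr); exact Hr.
        -- rewrite <- Heq.
           destruct y as [u|[u m]]; simpl in Hy.
           ++ destruct x as [u'|[u' m']]; simpl in Hx, Heq.
              ** subst; contradiction.
              ** tauto.
           ++ destruct x as [u'|[u' m']]; simpl in Heq; subst; simpl; tauto.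
    + intros [v [Hv [Hr Hsv]]].
      destruct (classic (rel M v v)) as [Hvv|Hvv].
      * destruct x as [u|[u m]].
        -- exists (inr (v, false)). simpl. split; [tauto|split].
           ++ left; simpl; auto.
           ++ rewrite (IHg Hs); simpl; auto.
        -- destruct (classic (u = v)) as [E|E].
           ++ subst. exists (inr (v, negb m)). simpl. split; [tauto|split].
              ** right; right. split; auto. intro E; injection E; destruct m; discriminate.
              ** rewrite (IHg Hs); simpl; auto.
           ++ exists (inr (v, false)). simpl. split; [tauto|split].
              ** right; left. exists u, m, v, false. simpl in Hr. auto.
              ** rewrite (IHg Hs); simpl; auto.
      * exists (inl v). simpl. split; [tauto|split].
        -- left; simpl; auto.
        -- rewrite (IHg Hs); simpl; auto.
  - simpl. rewrite IHg.
    + rewrite alpha_bd; reflexivity.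
    + eapply subf_trans; [|exact Hg]; repeat constructor.
    + apply world_bd, H2. eapply subf_At; exact Hg.
Qed.

Section Br.
Variable B : branch.

Lemma occurs_root k : In k (noms (root_form B)) -> occurs B k.
Proof. intro H; unfold occurs, forms; simpl; right; apply in_or_app; left; auto. Qed.

Lemma no_prec_root x k : is_branch B -> In k (noms (root_form B)) -> ~ prec B x k.
Proof.
  intros [_ Hv] Hk [phi Hin]. apply In_nth_error in Hin as [n Hn].
  destruct (Hv n _ Hn) as (_&_&_&Hocc). apply Hocc.
  unfold occurs, forms, prefix; simpl. right. apply in_or_app; left; auto.
Qed.

Lemma qu_root k : is_branch B -> In k (noms (root_form B)) -> quasi_urfather B k.
Proof.
  intros Hb Hk.
  assert (E : forall x, prec_star B x k -> x = k).
  { intros x H. apply clos_rt_rtn1 in H. inversion H; auto.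
    exfalso; eapply no_prec_root; eauto. }
  intros (j & k' & Hne & Hj & Hk' & _). apply E in Hj; apply E in Hk'. congruence.
Qed.

Lemma twins_sym a b : twins B a b -> twins B b a.
Proof. intros H phi; rewrite (H phi); tauto. Qed.
Lemma twins_trans a b c : twins B a b -> twins B b c -> twins B a c.
Proof. intros H H' phi; rewrite (H phi), (H' phi); tauto. Qed.
Lemma twins_refl a : twins B a a.
Proof. intro; tauto. Qed.

Lemma min_exists (Q : nat -> Prop) n : Q n -> exists m, Q m /\ forall m', Q m' -> m <= m'.
Proof.
  revert n. induction n as [n IH] using lt_wf_ind. intro Hn.
  destruct (classic (exists m', Q m' /\ m' < n)) as [[m' [Hm' Hlt]]|Hno].
  - exact (IH m' Hlt Hm').
  - exists n; split; auto. intros m' Hm'.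
    destruct (le_lt_dec n m'); auto. exfalso; apply Hno; eauto.
Qed.

Lemma in_dom_root k : is_branch B -> In k (noms (root_form B)) -> in_dom B k.
Proof.
  intros Hb Hk.
  set (L := flat_map noms (forms B)).
  set (Q := fun m => exists j, nth_error L m = Some j /\ occurs B j /\ twins B j k /\ quasi_urfather B j).
  assert (Hocc : occurs B k) by (apply occurs_root; auto).
  destruct (In_nth_error _ _ Hocc) as [n Hn].
  assert (HQ : Q n) by (exists k; split; [exact Hn|split; [exact Hocc|split; [apply twins_refl|apply qu_root; auto]]]).
  destruct (min_exists Q n HQ) as [m [[j (Hj & Hoj & Htj & Hqj)] Hmin]].
  exists j. split; [exact Hocc|split; [exact Hoj|split; [exact Htj|split; [exact Hqj|]]]].
  intros k' Hok' Htk' Hqk'. exists m. split; [exact Hj|].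
  intros m' Hm'. apply Hmin. exists k'. split; [exact Hm'|split; [exact Hok'|split; [|exact Hqk']]].
  exact Htk'.
Qed.

Lemma vnom_idurf k : in_dom B k -> idurf_of B k (vnom (branch_model B) k).
Proof.
  intro H. simpl.
  set (P := fun w => idurf_of B k w \/ (~ in_dom B k /\ w = root_nom B)).
  assert (Ex : exists w, P w) by (destruct H as [w Hw]; exists w; left; auto).
  destruct (epsilon_spec (inhabits 0) P Ex) as [h|[h _]]; [exact h|contradiction].
Qed.

Lemma idurf_self k w : idurf_of B k w -> identity_urfather B w.
Proof.
  intros (Hk & Hw & Htw & Hq & Hmin). split; [exact Hw|split; [exact Hw|split; [apply twins_refl|split; [exact Hq|]]]].
  intros k' Hok' Ht Hq'. apply Hmin; auto.
  apply twins_trans with w; auto.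
Qed.

Lemma key k : is_branch B -> ~ closed B -> saturated B -> subf (Nom k) (root_form B) ->
  ~ rel (branch_model B) (vnom (branch_model B) k) (vnom (branch_model B) k).
Proof.
  intros Hb Hc [Hs1 _] Hk.
  pose proof (subf_Nom _ _ Hk) as Hkn.
  pose proof (vnom_idurf k (in_dom_root k Hb Hkn)) as Hkw.
  set (w := vnom (branch_model B) k) in *.
  intros (a & b & Hab & _ & _ & Hc').
  assert (Ha : idurf_of B a w /\ idurf_of B b w) by tauto. clear Hc'.
  destruct Ha as [Ha Hbw].
  destruct Hkw as (_&_&Hwk&_). destruct Ha as (_&_&Hwa&_). destruct Hbw as (_&_&Hwb&_).
  assert (Hoccs : forall x, In x (noms (At a (Dia (Nom b)))) -> occurs B x).
  { intros x Hx. unfold occurs. apply in_flat_map. exists (At a (Dia (Nom b))); auto. }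
  assert (Hoa : occurs B a) by (apply Hoccs; simpl; auto).
  assert (Hob : occurs B b) by (apply Hoccs; simpl; auto).
  assert (Hok : occurs B k) by (apply occurs_root; auto).
  assert (Tk : T B k (Nom k)).
  { split; [|left; auto]. apply Hs1. do 7 right; left. eauto. }
  assert (Ta : T B a (Nom k)) by (apply Hwa, Hwk, Tk).
  assert (Tb : T B b (Nom k)) by (apply Hwb, Hwk, Tk).
  destruct Ta as [Ta _]; destruct Tb as [Tb _].
  assert (NA : forall i f, (forall j, f <> Dia (Nom j)) -> ~ acc B (At i f)).
  { intros i f Hf (i' & phi & j & _ & E). injection E; intros; subst; eapply Hf; eauto. }
  assert (Hbb : on B (At b (Nom b))) by (apply Hs1; do 7 right; left; eauto).
  assert (Haa : on B (At a (Nom a))) by (apply Hs1; do 7 right; left; eauto).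
  assert (Hkb : on B (At k (Nom b))).
  { apply Hs1. do 6 right; left. exists b, k, (Nom b). repeat split; auto.
    apply NA; discriminate. }
  assert (Hka : on B (At k (Nom a))).
  { apply Hs1. do 6 right; left. exists a, k, (Nom a). repeat split; auto.
    apply NA; discriminate. }
  assert (HkI : on B (At k (Neg (Dia (Nom k))))) by (apply Hs1; do 8 right; eauto).
  assert (HaI : on B (At a (Neg (Dia (Nom k))))).
  { apply Hs1. do 6 right; left. exists k, a, (Neg (Dia (Nom k))). repeat split; auto.
    apply NA; discriminate. }
  assert (Hbn : on B (At b (Neg (Nom k)))).
  { apply Hs1. do 2 right; left. exists a, (Nom k), b. repeat split; auto. }
  apply Hc. exists b, (Nom k). auto.
Qed.

End Br.

Theorem lemma13 (Th : branch) (i : nat) (phi : form) :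
  is_branch Th -> ~ closed Th -> saturated Th ->
  identity_urfather Th i ->
  qsub phi (root_form Th) ->
  (sat (branch_model Th) i phi <->
   sat (bulldoze (branch_model Th)) (bd_pt (branch_model Th) i) phi).
Proof.
  intros Hb Hc Hs Hi Hq.
  assert (E : forall g, subf g (root_form Th) ->
     (sat (bulldoze (branch_model Th)) (bd_pt (branch_model Th) i) g <->
      sat (branch_model Th) i g)).
  { intros g Hg. rewrite (bd_equiv (branch_model Th) (root_form Th)); auto.
    - rewrite alpha_bd; tauto.
    - intros k Hk; apply key; auto.
    - intros j Hj. simpl. eapply idurf_self, vnom_idurf, in_dom_root; eauto.
    - apply world_bd. exact Hi. }
  destruct Hq as [Hq|[chi [-> Hq]]].
  - rewrite E; tauto.
  - simpl. rewrite E; tauto.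
Qed.
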